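(* Let $m\ge 1$ and $n\geq 2m$ be integers, and let $p,q$ be real numbers with $0<p\leq q$ and $0<p+q<1$. Then the minimum discrepancy of $C_{n,m}$ satisfies $$\delta(C_{n,m})\geq\min\{m^2,\ (1+\gamma)m\},$$ where $\gamma=\gamma_{p,q}=\log_{\frac{q}{1-p}}\left(\frac{p}{1-q}\right)$.
   Context: For integers $n\geq 2$, $N=\binom{n}{2}$ and $1\leq m\leq n$, the community code $C_{n,m}\subseteq\mathbb{F}_2^N$ consists of exactly those binary vectors of length $N$ that are the upper-triangular (off-diagonal) part of the adjacency matrix of a simple undirected graph on the labeled vertex set $\{1,\ldots,n\}$ which is a disjoint union of cliques, each clique having at least $m$ vertices. For $\mathbf{x},\mathbf{y}\in\mathbb{F}_2^N$ and $a,b\in\mathbb{F}_2$ let $d_{ab}(\mathbf{y},\mathbf{x})=|\{i: y_i=a,\ x_i=b\}|$. The discrepancy (associated with a binary asymmetric channel with crossover probabilities $p$ for $0\to1$ and $q$ for $1\to0$) is $\delta(\mathbf{y},\mathbf{x})=\gamma\, d_{10}(\mathbf{y},\mathbf{x})+d_{01}(\mathbf{y},\mathbf{x})$ with $\gamma=\log_{\frac{q}{1-p}}\left(\frac{p}{1-q}\right)$ (one has $\gamma\ge 1$). The minimum discrepancy $\delta(C)$ of a code $C$ is the minimum of $\delta(\mathbf{y},\mathbf{x})$ over all ordered pairs of distinct codewords $\mathbf{x},\mathbf{y}\in C$. *)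

(* Defs.v *)
From HB Require Import structures.
From mathcomp Require Import all_boot all_order all_algebra.
From mathcomp Require Import all_classical all_reals all_analysis.
Set Implicit Arguments. Unset Strict Implicit. Unset Printing Implicit Defensive.
Import Order.TTheory GRing.Theory Num.Theory.
Local Open Scope ring_scope.

(* Coordinates of F_2^N, N = binom(n,2): unordered pairs {i,j}, i<j, of 'I_n. *)
Definition upair (n : nat) := {e : 'I_n * 'I_n | (e.1 < e.2)%N}.

Definition word (n : nat) := {ffun upair n -> bool}.

(* The upper-triangular part of the adjacency matrix of the graph on 'I_n
   that is the disjoint union of the cliques given by the blocks of P
   (i ~ j iff i != j and i, j lie in the same block). *)
Definition clique_union_word (n : nat) (P : {set {set 'I_n}}) : word n :=
  [ffun e : upair n => finset.pblock P (val e).1 == finset.pblock P (val e).2].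

(* A graph is a disjoint union of cliques each with at least m vertices iff
   its cliques form a partition of the vertex set with all blocks of size >= m. *)
Definition community_code (n m : nat) : {set word n} :=
  [set x : word n | [exists P : {set {set 'I_n}},
     [&& finset.partition P [set: 'I_n], [forall B in P, (m <= #|B|)%N] &
         x == clique_union_word P]]].

Definition dab (n : nat) (a b : bool) (y x : word n) : nat :=
  #|[set e : upair n | (y e == a) && (x e == b)]|.

Definition logb {R : realType} (b a : R) : R := ln a / ln b.

Definition gamma_pq {R : realType} (p q : R) : R :=
  logb (q / (1 - p)) (p / (1 - q)).

Definition discrepancy {R : realType} (gamma : R) (n : nat) (y x : word n) : R :=
  gamma * (dab true false y x)%:R + (dab false true y x)%:R.

(* Main.v *)
Require Import Defs.
From HB Require Import structures.
From mathcomp Require Import all_boot all_order all_algebra.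
From mathcomp Require Import all_classical all_reals all_analysis.
From mathcomp Require Import zify ring lra.
Import Order.TTheory GRing.Theory Num.Theory.
Set Implicit Arguments. Unset Strict Implicit. Unset Printing Implicit Defensive.

Definition r10 n (X Y : 'I_n -> {set 'I_n}) (a b : 'I_n) : bool :=
  (Y a == Y b) && (X a != X b).
Definition S10 n (X Y : 'I_n -> {set 'I_n}) : nat :=
  \sum_(a : 'I_n) \sum_(b : 'I_n) (r10 X Y a b : nat).

Lemma sum_sub n (S : {set 'I_n}) (f : 'I_n -> nat) :
  \sum_(a in S) f a <= \sum_a f a.
Proof. rewrite big_mkcond /=; apply: leq_sum => a _; by case: ifP. Qed.

Lemma sum_disj n (C D : {set 'I_n}) (f : 'I_n -> nat) :
  (forall a, a \in C -> a \notin D) ->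
  \sum_(a in C) f a + \sum_(a in D) f a <= \sum_a f a.
Proof.
move=> dis; rewrite (big_mkcond (fun a => a \in C)) (big_mkcond (fun a => a \in D)) -big_split /=.
apply: leq_sum => a _; case: (boolP (a \in C)) => aC; case: (boolP (a \in D)) => aD //=.
- by rewrite (negbTE (dis a aC)) in aD.
- by rewrite addn0.
Qed.

Section Comb.
Variables (n m : nat) (X Y : 'I_n -> {set 'I_n}).
Hypotheses (X1 : forall a, a \in X a) (X2 : forall a b, (b \in X a) = (X a == X b))
  (Xm : forall a, m <= #|X a|)
  (Y1 : forall a, a \in Y a) (Y2 : forall a b, (b \in Y a) = (Y a == Y b))
  (Ym : forall a, m <= #|Y a|).

Lemma Xeq a b : b \in X a -> X b = X a.
Proof. by rewrite X2 => /eqP ->. Qed.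
Lemma Yeq a b : b \in Y a -> Y b = Y a.
Proof. by rewrite Y2 => /eqP ->. Qed.

Lemma cnt10 a : \sum_b (r10 X Y a b : nat) = #|Y a :\: X a|.
Proof.
rewrite -sum1_card [RHS]big_mkcond /=; apply: eq_bigr => b _.
rewrite finset.in_setD X2 Y2 /r10; by case: (X a == X b); case: (Y a == Y b).
Qed.

Lemma cnt01 a : \sum_b (r10 Y X a b : nat) = #|X a :\: Y a|.
Proof.
rewrite -sum1_card [RHS]big_mkcond /=; apply: eq_bigr => b _.
rewrite finset.in_setD X2 Y2 /r10; by case: (X a == X b); case: (Y a == Y b).
Qed.

Lemma U w t : t \in X w -> t \notin Y w -> Y t \subset X t -> m <= #|X w :\: Y w|.
Proof.
move=> tX tY sub; apply: leq_trans (Ym t) _; apply: subset_leq_card.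
apply/fintype.subsetP => b bY; rewrite finset.in_setD; apply/andP; split.
- apply/negP => bYw; move: tY; rewrite (Y2 w t) -(Yeq bYw) (Yeq bY).
  by rewrite eqxx.
- by rewrite -(Xeq tX) (fintype.subsetP sub b bY).
Qed.

Lemma G k : 2 * (#|Y k :&: X k| * #|Y k :\: X k|) <= \sum_(a in Y k) #|Y a :\: X a|.
Proof.
have E1 : forall (A : {set 'I_n}) c, \sum_(i in A) c = #|A| * c := fun A c => sum_nat_const _ _.
rewrite (big_setID (X k)) /=.
have -> : \sum_(i in Y k :&: X k) #|Y i :\: X i| = \sum_(i in Y k :&: X k) #|Y k :\: X k|.
  apply: eq_bigr => a; rewrite finset.in_setI => /andP [aY aX].
  by rewrite (Yeq aY) (Xeq aX).
rewrite E1.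
have : \sum_(i in Y k :\: X k) #|Y k :&: X k| <= \sum_(i in Y k :\: X k) #|Y i :\: X i|.
  apply: leq_sum => a; rewrite finset.in_setD => /andP [aX aY].
  rewrite (Yeq aY); apply: subset_leq_card; apply/fintype.subsetP => b.
  rewrite finset.in_setI finset.in_setD => /andP [bY bX]; rewrite bY andbT.
  apply/negP => bXa; move: aX; rewrite (X2 k a) -(Xeq bXa) (Xeq bX) eqxx //.
rewrite E1 => HH; rewrite mul2n -addnn leq_add2l; by rewrite mulnC.
Qed.

Lemma cross k l : l \in Y k -> l \notin X k ->
  2 * (m - 1) <= \sum_(a in Y k) #|Y a :\: X a| /\ 2 <= \sum_(a in Y k) #|Y a :\: X a|.
Proof.
move=> lY lX; have := G k; have := cardsID (X k) (Y k).
have h1 : 0 < #|Y k :&: X k| by apply/card_gt0P; exists k; rewrite finset.in_setI X1 Y1.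
have h2 : 0 < #|Y k :\: X k| by apply/card_gt0P; exists l; rewrite finset.in_setD lY lX.
have := Ym k; nia.
Qed.

Lemma core c :
  (forall a, a \in Y c -> exists t, [/\ t \in X a, t \notin Y c & Y t \subset X t]) ->
  2 * (m * m) <= S10 Y X.
Proof.
move=> H; set C := Y c; rewrite /S10.
have sym a b : r10 Y X a b = r10 Y X b a.
  by rewrite /r10 eq_sym [Y a == _]eq_sym.
have H1 : \sum_a \sum_b ((a \in C) && (b \notin C) && r10 Y X a b : nat)
        + \sum_a \sum_b ((a \notin C) && (b \in C) && r10 Y X a b : nat)
        <= \sum_a \sum_b (r10 Y X a b : nat).
  rewrite -big_split; apply: leq_sum => a _; rewrite -big_split; apply: leq_sum => b _.
  by case: (a \in C); case: (b \in C); case: (r10 Y X a b).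
have H2 : \sum_a \sum_b ((a \notin C) && (b \in C) && r10 Y X a b : nat)
        = \sum_a \sum_b ((a \in C) && (b \notin C) && r10 Y X a b : nat).
  rewrite exchange_big; apply: eq_bigr => a _; apply: eq_bigr => b _.
  by rewrite sym; case: (a \in C); case: (b \in C).
have H3 : #|C| * m <= \sum_a \sum_b ((a \in C) && (b \notin C) && r10 Y X a b : nat).
  rewrite -sum_nat_const; apply: leq_trans (sum_sub C _); apply: leq_sum => a aC.
  rewrite aC /=; have [t [tX tY sub]] := H a aC.
  have Ya : Y a = C by rewrite /C (Yeq aC).
  have -> : \sum_b ((b \notin C) && r10 Y X a b : nat) = \sum_b (r10 Y X a b : nat).
    apply: eq_bigr => b _; rewrite /r10 -Ya Y2.
    by case: (Y a == Y b); case: (X a == X b).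
  rewrite cnt01; apply: (U tX) => //; by rewrite Ya.
have hm : m * m <= #|C| * m by rewrite leq_mul2r Ym orbT.
move: H1; rewrite H2 => h; apply: leq_trans h; rewrite mul2n -addnn; apply: leq_add; exact: leq_trans hm H3.
Qed.

Lemma K : (exists v, X v != Y v) -> S10 X Y < 2 * m -> 2 * (m * m) <= S10 Y X.
Proof.
move=> [v hv] hS.
have S10E : S10 X Y = \sum_a #|Y a :\: X a|.
  by apply: eq_bigr => a _; rewrite cnt10.
case: (boolP [forall a, Y a \subset X a]) => [/forallP allnc | /forallPn [i /fintype.subsetPn [j jY jX]]].
- have : ~~ (X v \subset Y v) by move: hv; rewrite finset.eqEsubset allnc andbT.
  case/fintype.subsetPn => t tX tY.
  apply: (core (c := v)) => a aY; exists t; split => //.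
  by rewrite (Xeq (fintype.subsetP (allnc v) a aY)).
- have nc : forall k, k \notin Y i -> Y k \subset X k.
    move=> k kY; apply/negPn/negP => /fintype.subsetPn [l lY lX].
    have dis : forall a, a \in Y i -> a \notin Y k.
      move=> a aYi; apply/negP => aYk; move: kY.
      by rewrite -(Yeq aYi) (Yeq aYk) Y1.
    have := sum_disj (fun a => #|Y a :\: X a|) dis.
    have := cross jY jX; have := cross lY lX; rewrite -S10E; lia.
  apply: (core (c := i)) => s sY.
  case: (boolP (X s \subset Y i)) => [sub | /fintype.subsetPn [t tX tY]]; last first.
    by exists t; split => //; apply: nc.
  exfalso.
  have Ys : Y s = Y i by apply: Yeq.
  have [l [lY lX]] : exists l, l \in Y s /\ l \notin X s.
    case: (boolP (i \in X s)) => iX.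
      exists j; split; first by rewrite Ys.
      by rewrite -(Xeq iX).
    by exists i; rewrite Ys Y1.
  have := G s; have := sum_sub (Y s) (fun a => #|Y a :\: X a|); rewrite -S10E.
  have -> : Y s :&: X s = X s by apply/finset.setIidPr; rewrite Ys.
  have h2 : 0 < #|Y s :\: X s| by apply/card_gt0P; exists l; rewrite finset.in_setD lY lX.
  have := Xm s; nia.
Qed.

End Comb.

Lemma twice n (r : rel 'I_n) : (forall a b, r a b = r b a) -> (forall a, r a a = false) ->
  \sum_a \sum_b (r a b : nat) = 2 * #|[set e : upair n | r (val e).1 (val e).2]|.
Proof.
move=> sym irr.
have E : #|[set e : upair n | r (val e).1 (val e).2]|
       = \sum_(p : 'I_n * 'I_n) ((p.1 < p.2) && r p.1 p.2 : nat).
  rewrite -(card_imset _ val_inj) -sum1_card [LHS]big_mkcond /=; apply: eq_bigr => p _.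
  have -> : (p \in [set val e | e in [set e : upair n | r (val e).1 (val e).2]])
            = (p.1 < p.2) && r p.1 p.2.
    apply/imsetP/andP => [[e He ->] | [lt H]].
      by move: He; rewrite finset.inE => He; split => //; exact: (valP e).
    by exists (exist _ p lt); rewrite ?finset.inE.
  by case: (_ && _).
rewrite E pair_bigA /=.
have -> : \sum_(p : 'I_n * 'I_n) (r p.1 p.2 : nat)
   = \sum_(p : 'I_n * 'I_n) ((p.1 < p.2) && r p.1 p.2 : nat)
     + \sum_(p : 'I_n * 'I_n) ((p.2 < p.1) && r p.1 p.2 : nat).
  rewrite -big_split; apply: eq_bigr => [[a b]] _ /=.
  case: (ltngtP a b) => [lt|gt|eq] /=; rewrite ?addn0 //.
  by rewrite (ord_inj eq) irr.
have -> : \sum_(p : 'I_n * 'I_n) ((p.2 < p.1) && r p.1 p.2 : nat)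
        = \sum_(p : 'I_n * 'I_n) ((p.1 < p.2) && r p.1 p.2 : nat).
  rewrite (reindex_inj (h := fun p : 'I_n * 'I_n => (p.2, p.1))) /=.
    by apply: eq_bigr => p _; rewrite sym.
  by move=> [a b] [c d] /= [-> ->].
by rewrite addnn -mul2n.
Qed.

Lemma pblock_props n (P : {set {set 'I_n}}) m :
  finset.partition P [set: 'I_n] -> [forall B in P, m <= #|B|] ->
  [/\ (forall a, a \in finset.pblock P a),
      (forall a b, (b \in finset.pblock P a) = (finset.pblock P a == finset.pblock P b)) &
      (forall a, m <= #|finset.pblock P a|)].
Proof.
move=> /and3P [/eqP cov triv _] /forall_inP big.
have mem a : a \in finset.pblock P a by rewrite mem_pblock cov finset.inE.
split => //.
- move=> a b; apply/idP/eqP => [h | ->]; last exact: mem.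
  by rewrite (same_pblock triv h).
- move=> a; apply: big; apply: pblock_mem; by rewrite cov finset.inE.
Qed.
Unset Implicit Arguments.
Local Open Scope ring_scope.

Lemma gamma_ge1 (R : realType) (p q : R) :
  0 < p -> p <= q -> 0 < p + q -> p + q < 1 -> 1 <= gamma_pq p q.
Proof.
move=> p0 pq pq0 pq1.
have h1p : 0 < 1 - p by lra.
have h1q : 0 < 1 - q by lra.
have A0 : 0 < p / (1 - q) by apply: divr_gt0.
have B0 : 0 < q / (1 - p) by apply: divr_gt0; lra.
have B1 : q / (1 - p) < 1 by rewrite ltr_pdivrMr // mul1r; lra.
have AB : p / (1 - q) <= q / (1 - p).
  rewrite -subr_ge0.
  have -> : q / (1 - p) - p / (1 - q) = (q * (1 - q) - p * (1 - p)) / ((1 - p) * (1 - q)).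
    by field; apply/andP; split; rewrite lt0r_neq0.
  apply: divr_ge0; last by apply: mulr_ge0; lra.
  nra.
have lnB : ln (q / (1 - p)) < 0 by apply: ln_lt0; rewrite B0 B1.
have lnAB : ln (p / (1 - q)) <= ln (q / (1 - p)) by rewrite ler_ln ?posrE.
rewrite /gamma_pq /logb ler_ndivlMr // mul1r //.
Qed.

Theorem theorem2 (R : realType) (n m : nat) (p q : R) :
  (1 <= m)%N -> (2 * m <= n)%N ->
  0 < p -> p <= q -> 0 < p + q -> p + q < 1 ->
  forall x y : word n,
    x \in community_code n m -> y \in community_code n m -> x != y ->
    Num.min ((m ^ 2)%:R : R) ((1 + gamma_pq p q) * m%:R)
      <= discrepancy (gamma_pq p q) y x.
Proof.
move=> m1 nm p0 pq pq0 pq1 x y.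
rewrite !finset.inE => /existsP [Px /and3P [px bx /eqP ->]] /existsP [Py /and3P [py by_ /eqP ->]] xy.
have [X1 X2 Xm] := pblock_props px bx.
have [Y1 Y2 Ym] := pblock_props py by_.
set X := finset.pblock Px in X1 X2 Xm xy *.
set Y := finset.pblock Py in Y1 Y2 Ym xy *.
have symr (U V : 'I_n -> {set 'I_n}) a b : r10 U V a b = r10 U V b a.
  by rewrite /r10 eq_sym [U a == _]eq_sym.
have irr (U V : 'I_n -> {set 'I_n}) a : r10 U V a a = false by rewrite /r10 !eqxx.
have hd1 : (2 * dab true false (clique_union_word Py) (clique_union_word Px) = S10 X Y)%N.
  rewrite /S10 (twice (symr X Y) (irr X Y)) /dab; congr (_ * _)%N; apply: eq_card => e.
  rewrite !finset.inE /clique_union_word !ffunE /r10 -/X -/Y.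
  by case: (Y _ == Y _); case: (X _ == X _).
have hd0 : (2 * dab false true (clique_union_word Py) (clique_union_word Px) = S10 Y X)%N.
  rewrite /S10 (twice (symr Y X) (irr Y X)) /dab; congr (_ * _)%N; apply: eq_card => e.
  rewrite !finset.inE /clique_union_word !ffunE /r10 -/X -/Y.
  by case: (Y _ == Y _); case: (X _ == X _).
have hne : exists v, X v != Y v.
  case: (boolP [exists v, X v != Y v]) => [/existsP // | /existsPn H].
  exfalso; move/negP: xy; apply; apply/eqP/ffunP => e; rewrite !ffunE -/X -/Y.
  by rewrite (eqP (negbNE (H (val e).1))) (eqP (negbNE (H (val e).2))).
have hne' : exists v, Y v != X v by case: hne => v hv; exists v; rewrite eq_sym.
have K1 := K X1 X2 Xm Y1 Y2 Ym hne.
have K2 := K Y1 Y2 Ym X1 X2 Xm hne'.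
rewrite /discrepancy.
move: hd1 hd0 K1 K2.
set d1 := dab true false _ _; set d0 := dab false true _ _.
move: (S10 X Y) (S10 Y X) => s1 s0.
have hm2 : (m ^ 2 = m * m)%N by rewrite expnS expn1.
rewrite hm2; move: (m * m)%N => M => h1 h0 K1 K2.
have g1 := @gamma_ge1 R p q p0 pq pq0 pq1.
set g := gamma_pq p q in g1 *.
have cases : [\/ (M <= d0)%N, (M <= d1)%N | (m <= d1)%N && (m <= d0)%N].
  case: (ltnP s1 (2 * m)) => hs1; first by apply: Or31; have := K1 hs1; lia.
  case: (ltnP s0 (2 * m)) => hs0; first by apply: Or32; have := K2 hs0; lia.
  by apply: Or33; apply/andP; split; lia.
have d1p : 0 <= d1%:R :> R by [].
have d0p : 0 <= d0%:R :> R by [].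
rewrite ge_min; case: cases => [hc | hc | /andP [hc1 hc2]].
- apply/orP; left; have : M%:R <= d0%:R :> R by rewrite ler_nat.
  nra.
- apply/orP; left; have : M%:R <= d1%:R :> R by rewrite ler_nat.
  nra.
- apply/orP; right.
  have : m%:R <= d1%:R :> R by rewrite ler_nat.
  have : m%:R <= d0%:R :> R by rewrite ler_nat.
  nra.
Qed.
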